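(* Let $\star$ be a state over time function satisfying axiom (E). Then for every channel $\mathcal{E}_{B|A}$ and every quantum state over spacetime $\rho_{AE}$ on $A\otimes E$, $$\mathcal{E}_{B|A}\star\rho_{AE}=\big((\mathcal{E}_{B|A}\star\,\cdot\,)\otimes\mathrm{id}_E\big)(\rho_{AE}),$$ where $\mathcal{E}_{B|A}\star\,\cdot\,$ denotes the linear map $\sigma_A\mapsto\mathcal{E}_{B|A}\star\sigma_A$ from $\mathfrak{B}(A)$ to $\mathfrak{B}(A\otimes B)$. Conversely, every state-linear state over time function satisfies axiom (E) when its action on subsystems is defined by this formula.
   Context: Systems are finite-dimensional Hilbert spaces; $\mathfrak{B}(A)$ linear operators, $\mathfrak{S}(A)$ density operators, $\mathfrak{C}(A,B)$ quantum channels (CPTP maps $\mathfrak{B}(A)\to\mathfrak{B}(B)$). A state over time function assigns to all systems $A,B$ a map $\star:\mathfrak{C}(A,B)\times\mathfrak{S}(A)\to\mathfrak{B}(A\otimes B)$, $(\mathcal{E},\rho)\mapsto\mathcal{E}_{B|A}\star\rho_A$, with $\mathrm{Tr}_A[\mathcal{E}\star\rho]=\mathcal{E}(\rho)$ and $\mathrm{Tr}_B[\mathcal{E}\star\rho]=\rho$, extended homogeneously by $(\lambda\mathcal{E})\star\rho=\mathcal{E}\star(\lambda\rho)=\lambda(\mathcal{E}\star\rho)$, $\lambda\in\mathbb{C}$. It is state-linear if it is linear in the second argument (a state-linear function extends uniquely to a linear map in the second argument on all of $\mathfrak{B}(A)$). A quantum state over spacetime on $A\otimes E$ is either a density operator on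 $A\otimes E$ or an operator of the form $\mathcal{F}\star\sigma$. Axiom (E): for all systems $A,B,E$, every quantum state over spacetime $\rho_{AE}$ and every channel $\mathcal{E}_{B|A}$, an operator $\mathcal{E}_{B|A}\star\rho_{AE}$ on $A\otimes B\otimes E$ is defined such that for every completely positive trace-non-increasing map $\mathcal{I}_E$ on $E$, $\mathcal{I}_E[\mathcal{E}_{B|A}\star\rho_{AE}]=\mathcal{E}_{B|A}\star\mathcal{I}_E(\rho_{AE})$, and $\mathrm{Tr}_A[\mathcal{E}_{B|A}\star\rho_{AE}]=(\mathcal{E}_{B|A}\otimes\mathrm{id}_E)(\rho_{AE})$. *)

(* Defs.v *)
From mathcomp Require Import all_boot all_order all_algebra.
From mathcomp Require Import reals.
From mathcomp.real_closed Require Export complex mxtens.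

Set Implicit Arguments.
Unset Strict Implicit.
Unset Printing Implicit Defensive.

Import Order.TTheory GRing.Theory Num.Theory.
Local Open Scope ring_scope.

(* A system is a finite-dimensional Hilbert space C^m, identified with its
   dimension m; B(A) = 'M[R[i]]_m.  The composite A (x) B has dimension m*n,
   with basis index mxtens_index (a, b) (A is the first tensor factor), and
   A *t B is the Kronecker product. *)

Definition adjmx (R : realType) (m n : nat) (A : 'M[R[i]]_(m, n)) : 'M[R[i]]_(n, m) :=
  \matrix_(i, j) (A j i)^*.

Definition is_psd (R : realType) (m : nat) (A : 'M[R[i]]_m) : Prop :=
  forall v : 'cV[R[i]]_m, 0 <= (adjmx v *m A *m v) 0 0.

Definition is_density (R : realType) (m : nat) (A : 'M[R[i]]_m) : Prop :=
  is_psd A /\ \tr A = 1.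

Definition is_linear (R : realType) (m n : nat)
    (f : 'M[R[i]]_m -> 'M[R[i]]_n) : Prop :=
  forall (a : R[i]) (x y : 'M[R[i]]_m), f (a *: x + y) = a *: f x + f y.

(* f (x) g acting on B(A1 (x) A2), defined on the matrix-unit basis and
   extended linearly (for linear f, g this is the usual tensor product map). *)
Definition tensor_map (R : realType) (m1 n1 m2 n2 : nat)
    (f : 'M[R[i]]_m1 -> 'M[R[i]]_n1) (g : 'M[R[i]]_m2 -> 'M[R[i]]_n2)
    (X : 'M[R[i]]_(m1 * m2)) : 'M[R[i]]_(n1 * n2) :=
  \sum_(a < m1) \sum_(b < m1) \sum_(c < m2) \sum_(d < m2)
     X (mxtens_index (a, c)) (mxtens_index (b, d))
       *: (f (delta_mx a b) *t g (delta_mx c d)).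

Definition is_CP (R : realType) (m n : nat) (f : 'M[R[i]]_m -> 'M[R[i]]_n) : Prop :=
  is_linear f /\
  forall (k : nat) (X : 'M[R[i]]_(m * k)),
    is_psd X -> is_psd (tensor_map f (fun Y : 'M[R[i]]_k => Y) X).

Definition is_TP (R : realType) (m n : nat) (f : 'M[R[i]]_m -> 'M[R[i]]_n) : Prop :=
  forall X : 'M[R[i]]_m, \tr (f X) = \tr X.

Definition is_TNI (R : realType) (m n : nat) (f : 'M[R[i]]_m -> 'M[R[i]]_n) : Prop :=
  forall X : 'M[R[i]]_m, is_psd X -> \tr (f X) <= \tr X.

Definition is_channel (R : realType) (m n : nat) (f : 'M[R[i]]_m -> 'M[R[i]]_n) : Prop :=
  is_CP f /\ is_TP f.

Definition ptr1 (R : realType) (m n : nat) (X : 'M[R[i]]_(m * n)) : 'M[R[i]]_n :=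
  \matrix_(i, j) \sum_(a < m) X (mxtens_index (a, i)) (mxtens_index (a, j)).
Definition ptr2 (R : realType) (m n : nat) (X : 'M[R[i]]_(m * n)) : 'M[R[i]]_m :=
  \matrix_(i, j) \sum_(b < n) X (mxtens_index (i, b)) (mxtens_index (j, b)).

(* the type of a (candidate) state over time function:
   star m n E rho = E_{B|A} * rho_A, an operator on A (x) B *)
Definition sot_fun (R : realType) : Type :=
  forall m n : nat, ('M[R[i]]_m -> 'M[R[i]]_n) -> 'M[R[i]]_m -> 'M[R[i]]_(m * n).

(* state over time function: marginal conditions on channels and states,
   together with the homogeneous extension conventions *)
Definition is_sot (R : realType) (star : sot_fun R) : Prop :=
  forall (m n : nat) (E : 'M[R[i]]_m -> 'M[R[i]]_n), is_channel E ->
  forall rho : 'M[R[i]]_m, is_density rho ->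
    [/\ ptr1 (star m n E rho) = E rho,
        ptr2 (star m n E rho) = rho,
        forall lam : R[i], star m n E (lam *: rho) = lam *: star m n E rho &
        forall lam : R[i], star m n (fun X => lam *: E X) rho = lam *: star m n E rho].

Definition is_linext (R : realType) (star : sot_fun R) (m n : nat)
    (E : 'M[R[i]]_m -> 'M[R[i]]_n) (L : 'M[R[i]]_m -> 'M[R[i]]_(m * n)) : Prop :=
  is_linear L /\ forall rho, is_density rho -> L rho = star m n E rho.

Definition state_linear (R : realType) (star : sot_fun R) : Prop :=
  forall (m n : nat) (E : 'M[R[i]]_m -> 'M[R[i]]_n), is_channel E ->
    exists L, is_linext star E L.

Definition is_QSS (R : realType) (star : sot_fun R) (m k : nat)
    (X : 'M[R[i]]_(m * k)) : Prop :=
  is_density X \/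
  exists (F : 'M[R[i]]_m -> 'M[R[i]]_k) (sigma : 'M[R[i]]_m),
    [/\ is_channel F, is_density sigma & X = star m k F sigma].

(* the type of the action on subsystems required by axiom (E):
   ext m n k E rho_AE = E_{B|A} * rho_AE, an operator on A (x) B (x) E *)
Definition ext_fun (R : realType) : Type :=
  forall m n k : nat, ('M[R[i]]_m -> 'M[R[i]]_n) ->
    'M[R[i]]_(m * k) -> 'M[R[i]]_(m * n * k).

Definition axiomE (R : realType) (star : sot_fun R) (ext : ext_fun R) : Prop :=
  (forall (m n k k' : nat) (E : 'M[R[i]]_m -> 'M[R[i]]_n)
          (I : 'M[R[i]]_k -> 'M[R[i]]_k') (rho : 'M[R[i]]_(m * k)),
     is_channel E -> is_QSS star rho -> is_CP I -> is_TNI I ->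
     tensor_map (fun Y : 'M[R[i]]_(m * n) => Y) I (ext m n k E rho)
     = ext m n k' E (tensor_map (fun Y : 'M[R[i]]_m => Y) I rho)) /\
  (forall (m n k : nat) (E : 'M[R[i]]_m -> 'M[R[i]]_n) (rho : 'M[R[i]]_(m * k)),
     is_channel E -> is_QSS star rho ->
     tensor_map (@ptr1 R m n) (fun Y : 'M[R[i]]_k => Y) (ext m n k E rho)
     = tensor_map E (fun Y : 'M[R[i]]_k => Y) rho) /\
  (* trivial environment (A (x) C = A): the action is the given one, on
     (scaled) states ... *)
  (forall (m n : nat) (E : 'M[R[i]]_m -> 'M[R[i]]_n) (lam : R[i]) (rho : 'M[R[i]]_m),
     is_channel E -> is_density rho ->
     ext m n 1 E ((lam *: rho) *t (1%:M : 'M[R[i]]_1))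
     = star m n E (lam *: rho) *t (1%:M : 'M[R[i]]_1)) /\
  (forall (m n : nat) (E : 'M[R[i]]_m -> 'M[R[i]]_n) (L : 'M[R[i]]_m -> 'M[R[i]]_(m * n)),
     is_channel E -> is_linext star E L ->
     forall Y : 'M[R[i]]_m,
       ext m n 1 E (Y *t (1%:M : 'M[R[i]]_1)) = L Y *t (1%:M : 'M[R[i]]_1)).

(* Main.v *)
Require Import Defs.
From mathcomp Require Import all_boot all_order all_algebra.
From mathcomp Require Import reals.
From mathcomp.real_closed Require Import complex mxtens.
From mathcomp Require Import ring.
Import Order.TTheory GRing.Theory Num.Theory.
Local Open Scope ring_scope.
Set Implicit Arguments.
Unset Strict Implicit.
Unset Printing Implicit Defensive.

Section Aux.
Variable R : realType.
Local Notation C := (R[i]).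

Lemma lin_add m n (f : 'M[C]_m -> 'M[C]_n) : is_linear f -> forall x y, f (x + y) = f x + f y.
Proof. by move=> hf x y; rewrite -[x in LHS]scale1r hf scale1r. Qed.

Lemma lin_0 m n (f : 'M[C]_m -> 'M[C]_n) : is_linear f -> f 0 = 0.
Proof.
move=> hf; have h := lin_add hf 0 0; rewrite addr0 in h.
by apply: (addrI (f 0)); rewrite addr0 -h.
Qed.

Lemma lin_scale m n (f : 'M[C]_m -> 'M[C]_n) : is_linear f -> forall a x, f (a *: x) = a *: f x.
Proof. by move=> hf a x; rewrite -[a *: x]addr0 hf lin_0 // addr0. Qed.

Lemma lin_sum m n (f : 'M[C]_m -> 'M[C]_n) : is_linear f ->
  forall (I : Type) (r : seq I) (P : pred I) (F : I -> 'M[C]_m),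
  f (\sum_(i <- r | P i) F i) = \sum_(i <- r | P i) f (F i).
Proof. by move=> hf I r P F; apply: big_morph; [exact: lin_add | exact: lin_0]. Qed.

Lemma lin_comp m n p (f : 'M[C]_m -> 'M[C]_n) (g : 'M[C]_n -> 'M[C]_p) :
  is_linear f -> is_linear g -> is_linear (fun x => g (f x)).
Proof. by move=> hf hg a x y; rewrite hf hg. Qed.

Lemma lin_id m : is_linear (fun x : 'M[C]_m => x).
Proof. by []. Qed.

Lemma lin_addf m n (f g : 'M[C]_m -> 'M[C]_n) :
  is_linear f -> is_linear g -> is_linear (fun x => f x + g x).
Proof. by move=> hf hg a x y; rewrite hf hg scalerDr -!addrA; congr (_ + _); rewrite addrCA. Qed.

Lemma lin_scalef m n (s : C) (f : 'M[C]_m -> 'M[C]_n) :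
  is_linear f -> is_linear (fun x => s *: f x).
Proof. by move=> hf a x y; rewrite hf scalerDr !scalerA mulrC. Qed.

Lemma adjmxE m n (A : 'M[C]_(m,n)) i j : adjmx A i j = (A j i)^*.
Proof. by rewrite mxE. Qed.

Lemma adjmxK m n (A : 'M[C]_(m,n)) : adjmx (adjmx A) = A.
Proof. by apply/matrixP=> i j; rewrite !mxE conjCK. Qed.

Lemma adjmxD m n (A B : 'M[C]_(m,n)) : adjmx (A + B) = adjmx A + adjmx B.
Proof. by apply/matrixP=> i j; rewrite !mxE rmorphD. Qed.

Lemma adjmxZ m n (a : C) (A : 'M[C]_(m,n)) : adjmx (a *: A) = a^* *: adjmx A.
Proof. by apply/matrixP=> i j; rewrite !mxE rmorphM. Qed.

Lemma adjmx_sum m n (I : Type) (r : seq I) (P : pred I) (F : I -> 'M[C]_(m,n)) :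
  adjmx (\sum_(i <- r | P i) F i) = \sum_(i <- r | P i) adjmx (F i).
Proof.
apply: big_morph; first exact: adjmxD.
by apply/matrixP=> i j; rewrite !mxE conjC0.
Qed.

Lemma adjmx_mul m n p (A : 'M[C]_(m,n)) (B : 'M[C]_(n,p)) :
  adjmx (A *m B) = adjmx B *m adjmx A.
Proof.
apply/matrixP=> i j; rewrite !mxE rmorph_sum; apply: eq_bigr => l _.
by rewrite !mxE rmorphM mulrC.
Qed.

Lemma adjmx1 m : adjmx (1%:M : 'M[C]_m) = 1%:M.
Proof. by apply/matrixP=> i j; rewrite !mxE eq_sym; case: eqP; rewrite ?conjC1 ?conjC0. Qed.

Lemma adjmx_delta m n (i : 'I_m) (j : 'I_n) : adjmx (delta_mx i j : 'M[C]_(m,n)) = delta_mx j i.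
Proof.
apply/matrixP=> x y; rewrite !mxE.
by case: (y == i); case: (x == j); rewrite /= ?conjC1 ?conjC0.
Qed.

Lemma tensmxDl m n p q (A B : 'M[C]_(m,n)) (D : 'M[C]_(p,q)) : (A + B) *t D = A *t D + B *t D.
Proof. by apply/matrixP=> i j; rewrite !mxE mulrDl. Qed.
Lemma tensmxDr m n p q (A : 'M[C]_(m,n)) (B D : 'M[C]_(p,q)) : A *t (B + D) = A *t B + A *t D.
Proof. by apply/matrixP=> i j; rewrite !mxE mulrDr. Qed.
Lemma tensmxZl m n p q a (A : 'M[C]_(m,n)) (D : 'M[C]_(p,q)) : (a *: A) *t D = a *: (A *t D).
Proof. by apply/matrixP=> i j; rewrite !mxE mulrA. Qed.
Lemma tensmxZr m n p q a (A : 'M[C]_(m,n)) (D : 'M[C]_(p,q)) : A *t (a *: D) = a *: (A *t D).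
Proof. by apply/matrixP=> i j; rewrite !mxE mulrCA. Qed.
Lemma tensmx_suml m n p q (I : Type) (r : seq I) (P : pred I) (F : I -> 'M[C]_(m,n)) (D : 'M[C]_(p,q)) :
  (\sum_(i <- r | P i) F i) *t D = \sum_(i <- r | P i) (F i *t D).
Proof.
apply: (big_morph (fun A => A *t D)); first by move=> x y; rewrite tensmxDl.
exact: tens0mx.
Qed.
Lemma tensmx_sumr m n p q (I : Type) (r : seq I) (P : pred I) (A : 'M[C]_(m,n)) (F : I -> 'M[C]_(p,q)) :
  A *t (\sum_(i <- r | P i) F i) = \sum_(i <- r | P i) (A *t F i).
Proof.
apply: (big_morph (fun D => A *t D)); first by move=> x y; rewrite tensmxDr.
exact: tensmx0.
Qed.

Lemma adjmx_tens m n p q (A : 'M[C]_(m,n)) (B : 'M[C]_(p,q)) :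
  adjmx (A *t B) = adjmx A *t adjmx B.
Proof. by apply/matrixP=> i j; rewrite !mxE rmorphM. Qed.

Lemma tens11 m n : (1%:M : 'M[C]_m) *t (1%:M : 'M[C]_n) = 1%:M.
Proof.
apply/matrixP=> i j.
case: (mxtens_indexP i)=> a c; case: (mxtens_indexP j)=> b d.
rewrite tensmxE !mxE (inj_eq (can_inj (@mxtens_indexK _ _))) xpair_eqE.
by case: (a == b); case: (c == d); rewrite ?mulr1 ?mulr0 ?mul0r.
Qed.

Lemma tens_delta m n p q (a : 'I_m) (b : 'I_n) (c : 'I_p) (d : 'I_q) :
  (delta_mx a b : 'M[C]_(m,n)) *t (delta_mx c d : 'M[C]_(p,q))
  = delta_mx (mxtens_index (a, c)) (mxtens_index (b, d)).
Proof.
apply/matrixP=> i j.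
case: (mxtens_indexP i)=> x z; case: (mxtens_indexP j)=> y w.
rewrite tensmxE !mxE !(inj_eq (can_inj (@mxtens_indexK _ _))) !xpair_eqE.
by case: (x == a); case: (y == b); case: (z == c); case: (w == d); rewrite ?mulr1 ?mulr0 ?mul0r.
Qed.

Lemma tens1_inj m n (A B : 'M[C]_(m,n)) :
  A *t (1%:M : 'M[C]_1) = B *t (1%:M : 'M[C]_1) -> A = B.
Proof.
move=> h; apply/matrixP=> i j.
have := congr1 (fun M : 'M[C]_(m * 1, n * 1) => M (mxtens_index (i, ord0 : 'I_1)) (mxtens_index (j, ord0 : 'I_1))) h.
by rewrite /= !tensmxE !mxE /= !mulr1.
Qed.

Definition shrink m n (X : 'M[C]_(m * 1, n * 1)) : 'M[C]_(m,n) :=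
  \matrix_(i, j) X (mxtens_index (i, ord0 : 'I_1)) (mxtens_index (j, ord0 : 'I_1)).

Lemma shrinkK m n (X : 'M[C]_(m * 1, n * 1)) : X = shrink X *t (1%:M : 'M[C]_1).
Proof.
apply/matrixP=> i j.
case: (mxtens_indexP i)=> x z; case: (mxtens_indexP j)=> y w.
by rewrite tensmxE !mxE !ord1 /= mulr1.
Qed.


Definition sum4 (V : nmodType) m1 m2 (F : 'I_m1 -> 'I_m1 -> 'I_m2 -> 'I_m2 -> V) : V :=
  \sum_(a < m1) \sum_(b < m1) \sum_(c < m2) \sum_(d < m2) F a b c d.

Lemma sum4_ext (V : nmodType) m1 m2 (F G : 'I_m1 -> 'I_m1 -> 'I_m2 -> 'I_m2 -> V) :
  (forall a b c d, F a b c d = G a b c d) -> sum4 F = sum4 G.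
Proof.
move=> h; rewrite /sum4; apply: eq_bigr => a _; apply: eq_bigr => b _.
by apply: eq_bigr => c _; apply: eq_bigr => d _.
Qed.

Lemma sum4D (V : nmodType) m1 m2 (F G : 'I_m1 -> 'I_m1 -> 'I_m2 -> 'I_m2 -> V) :
  sum4 (fun a b c d => F a b c d + G a b c d) = sum4 F + sum4 G.
Proof.
rewrite /sum4 -big_split; apply: eq_bigr => a _; rewrite -big_split.
apply: eq_bigr => b _; rewrite -big_split; apply: eq_bigr => c _.
by rewrite -big_split.
Qed.

Lemma sum4Z m1 m2 p q (s : C) (F : 'I_m1 -> 'I_m1 -> 'I_m2 -> 'I_m2 -> 'M[C]_(p,q)) :
  sum4 (fun a b c d => s *: F a b c d) = s *: sum4 F.
Proof.
rewrite /sum4 scaler_sumr; apply: eq_bigr => a _; rewrite scaler_sumr.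
apply: eq_bigr => b _; rewrite scaler_sumr; apply: eq_bigr => c _.
by rewrite scaler_sumr.
Qed.

Lemma lin_sum4 m n m1 m2 (f : 'M[C]_m -> 'M[C]_n) (F : 'I_m1 -> 'I_m1 -> 'I_m2 -> 'I_m2 -> 'M[C]_m) :
  is_linear f -> f (sum4 F) = sum4 (fun a b c d => f (F a b c d)).
Proof.
move=> hf; rewrite /sum4 lin_sum //; apply: eq_bigr => a _; rewrite lin_sum //.
apply: eq_bigr => b _; rewrite lin_sum //; apply: eq_bigr => c _.
by rewrite lin_sum.
Qed.

Lemma tmapE m1 n1 m2 n2 (f : 'M[C]_m1 -> 'M[C]_n1) (g : 'M[C]_m2 -> 'M[C]_n2) X :
  tensor_map f g X = sum4 (fun a b c d =>
     X (mxtens_index (a, c)) (mxtens_index (b, d)) *: (f (delta_mx a b) *t g (delta_mx c d))).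
Proof. by []. Qed.

Lemma tmap_linear m1 n1 m2 n2 (f : 'M[C]_m1 -> 'M[C]_n1) (g : 'M[C]_m2 -> 'M[C]_n2) :
  is_linear (tensor_map f g).
Proof.
move=> s X Y; rewrite !tmapE -sum4Z -sum4D; apply: sum4_ext => a b c d.
by rewrite !mxE scalerDl scalerA.
Qed.

Lemma sum_pair (V : nmodType) m k (F : 'I_(m * k) -> V) :
  \sum_i F i = \sum_(a < m) \sum_(c < k) F (mxtens_index (a, c)).
Proof.
rewrite pair_big (reindex (@mxtens_index m k)) /=.
  by apply: eq_bigr => -[a c] _.
by exists (@mxtens_unindex m k) => x _; rewrite ?mxtens_indexK ?mxtens_unindexK.
Qed.

Lemma Zexp m k (X : 'M[C]_(m * k)) :
  X = sum4 (fun a b c d => X (mxtens_index (a, c)) (mxtens_index (b, d)) *: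
                            ((delta_mx a b : 'M[C]_m) *t (delta_mx c d : 'M[C]_k))).
Proof.
rewrite {1}[X]matrix_sum_delta sum_pair /sum4; apply: eq_bigr => a _.
rewrite exchange_big sum_pair; apply: eq_bigr => b _.
rewrite exchange_big; apply: eq_bigr => c _; apply: eq_bigr => d _.
by rewrite tens_delta.
Qed.

Lemma tmap_ext m k p (Phi Psi : 'M[C]_(m * k) -> 'M[C]_p) :
  is_linear Phi -> is_linear Psi ->
  (forall a b c d, Phi ((delta_mx a b : 'M[C]_m) *t (delta_mx c d : 'M[C]_k))
                 = Psi ((delta_mx a b : 'M[C]_m) *t (delta_mx c d : 'M[C]_k))) ->
  forall X, Phi X = Psi X.
Proof.
move=> h1 h2 h X; rewrite (Zexp X) !lin_sum4 //; apply: sum4_ext => a b c d.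
by rewrite !lin_scale // h.
Qed.

Lemma lin_expand m n (f : 'M[C]_m -> 'M[C]_n) A : is_linear f ->
  f A = \sum_(a < m) \sum_(b < m) A a b *: f (delta_mx a b).
Proof.
move=> hf; rewrite {1}[A]matrix_sum_delta lin_sum //; apply: eq_bigr => a _.
rewrite lin_sum //; apply: eq_bigr => b _; by rewrite lin_scale.
Qed.

Lemma tmap_tens m1 n1 m2 n2 (f : 'M[C]_m1 -> 'M[C]_n1) (g : 'M[C]_m2 -> 'M[C]_n2) A B :
  is_linear f -> is_linear g -> tensor_map f g (A *t B) = f A *t g B.
Proof.
move=> hf hg; rewrite tmapE (lin_expand A hf) (lin_expand B hg).
rewrite /sum4 tensmx_suml; apply: eq_bigr => a _; rewrite tensmx_suml.
apply: eq_bigr => b _; rewrite tensmx_sumr; apply: eq_bigr => c _.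
rewrite tensmx_sumr; apply: eq_bigr => d _.
by rewrite tensmxE tensmxZl tensmxZr scalerA.
Qed.

Lemma tmap_comp m n k k' (L : 'M[C]_m -> 'M[C]_(m * n)) (I : 'M[C]_k -> 'M[C]_k') X :
  is_linear L -> is_linear I ->
  tensor_map (fun Y : 'M[C]_(m * n) => Y) I (tensor_map L (fun Y : 'M[C]_k => Y) X)
  = tensor_map L (fun Y : 'M[C]_k' => Y) (tensor_map (fun Y : 'M[C]_m => Y) I X).
Proof.
move=> hL hI.
apply: (tmap_ext (Phi := fun X => tensor_map (fun Y : 'M[C]_(m * n) => Y) I (tensor_map L (fun Y : 'M[C]_k => Y) X))
  (Psi := fun X => tensor_map L (fun Y : 'M[C]_k' => Y) (tensor_map (fun Y : 'M[C]_m => Y) I X))) X.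
- by apply: lin_comp; apply: tmap_linear.
- by apply: lin_comp; apply: tmap_linear.
by move=> a b c d; rewrite !tmap_tens.
Qed.

Lemma tmap_addf m1 n1 m2 n2 (f1 f2 : 'M[C]_m1 -> 'M[C]_n1) (g : 'M[C]_m2 -> 'M[C]_n2) X :
  is_linear f1 -> is_linear f2 -> is_linear g ->
  tensor_map (fun Y => f1 Y + f2 Y) g X = tensor_map f1 g X + tensor_map f2 g X.
Proof.
move=> h1 h2 hg; apply: (tmap_ext (Psi := fun X => tensor_map f1 g X + tensor_map f2 g X)) X.
- exact: tmap_linear.
- by apply: lin_addf; apply: tmap_linear.
by move=> a b c d; rewrite !tmap_tens //; [rewrite tensmxDl | exact: lin_addf].
Qed.

Lemma tmap_addg m1 n1 m2 n2 (f : 'M[C]_m1 -> 'M[C]_n1) (g1 g2 : 'M[C]_m2 -> 'M[C]_n2) X :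
  is_linear f -> is_linear g1 -> is_linear g2 ->
  tensor_map f (fun Y => g1 Y + g2 Y) X = tensor_map f g1 X + tensor_map f g2 X.
Proof.
move=> hf h1 h2; apply: (tmap_ext (Psi := fun X => tensor_map f g1 X + tensor_map f g2 X)) X.
- exact: tmap_linear.
- by apply: lin_addf; apply: tmap_linear.
by move=> a b c d; rewrite !tmap_tens //; [rewrite tensmxDr | exact: lin_addf].
Qed.

Definition Ad m n (S : 'M[C]_(m, n)) (X : 'M[C]_m) : 'M[C]_n := adjmx S *m X *m S.

Lemma lin_Ad m n (S : 'M[C]_(m, n)) : is_linear (Ad S).
Proof. by move=> a X Y; rewrite /Ad mulmxDr mulmxDl -scalemxAr -scalemxAl. Qed.

Lemma tmap_Ad_l k k' (w : 'M[C]_(k, 1)) X :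
  tensor_map (Ad w) (fun Y : 'M[C]_k' => Y) X = Ad (w *t (1%:M : 'M[C]_k')) X.
Proof.
apply: (tmap_ext (Phi := tensor_map (Ad w) (fun Y : 'M[C]_k' => Y))) X; [exact: tmap_linear | exact: lin_Ad |].
move=> a b c d; rewrite tmap_tens //; last exact: lin_Ad.
by rewrite /Ad adjmx_tens adjmx1 !tensmx_mul mul1mx mulmx1.
Qed.

Lemma tmap_Ad_r p k (w : 'M[C]_(k, 1)) Z :
  tensor_map (fun Y : 'M[C]_p => Y) (Ad w) Z = Ad ((1%:M : 'M[C]_p) *t w) Z.
Proof.
apply: (tmap_ext (Phi := tensor_map (fun Y : 'M[C]_p => Y) (Ad w))) Z; [exact: tmap_linear | exact: lin_Ad |].
move=> a b c d; rewrite tmap_tens //; last exact: lin_Ad.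
by rewrite /Ad adjmx_tens adjmx1 !tensmx_mul mul1mx mulmx1.
Qed.


Lemma quadE m (v : 'cV[C]_m) (M : 'M[C]_m) :
  (adjmx v *m M *m v) 0 0 = \sum_i \sum_j (v i 0)^* * M i j * v j 0.
Proof.
rewrite mxE; under eq_bigr do rewrite mxE mulr_suml.
rewrite exchange_big; apply: eq_bigr => i _; apply: eq_bigr => j _.
by rewrite mxE.
Qed.

Lemma Bdelta m (M : 'M[C]_m) (c d : 'I_m) :
  (adjmx (@delta_mx C m 1 c 0) *m M *m @delta_mx C m 1 d 0) 0 0 = M c d.
Proof. by rewrite adjmx_delta -rowE -colE !mxE. Qed.

Lemma psd_add m (A B : 'M[C]_m) : is_psd A -> is_psd B -> is_psd (A + B).
Proof.
move=> hA hB v; have := lin_add (lin_Ad v) A B; rewrite /Ad => ->.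
by rewrite mxE addr_ge0.
Qed.

Lemma psd_scale m (t : C) (A : 'M[C]_m) : 0 <= t -> is_psd A -> is_psd (t *: A).
Proof.
move=> ht hA v; have := lin_scale (lin_Ad v) t A; rewrite /Ad => ->.
by rewrite mxE mulr_ge0.
Qed.

Lemma psd_Ad m n (S : 'M[C]_(m, n)) (A : 'M[C]_m) : is_psd A -> is_psd (Ad S A).
Proof.
move=> hA v; rewrite /Ad.
have -> : adjmx v *m (adjmx S *m A *m S) *m v = adjmx (S *m v) *m A *m (S *m v).
  by rewrite adjmx_mul !mulmxA.
exact: hA.
Qed.

Lemma psd_tens1 m (A : 'M[C]_m) : is_psd A -> is_psd (A *t (1%:M : 'M[C]_1)).
Proof.
move=> hA v.
pose u : 'cV[C]_m := \col_a v (mxtens_index (a, ord0 : 'I_1)) 0.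
have -> : (adjmx v *m (A *t 1%:M) *m v) 0 0 = (adjmx u *m A *m u) 0 0.
  rewrite !quadE sum_pair; apply: eq_bigr => a _; rewrite big_ord1.
  rewrite sum_pair; apply: eq_bigr => b _; rewrite big_ord1.
  by rewrite tensmxE !mxE /= mulr1.
exact: hA.
Qed.

Lemma tens_deltacc m k (A : 'M[C]_m) (c : 'I_k) :
  A *t (delta_mx c c : 'M[C]_k) =
  Ad ((1%:M : 'M[C]_m) *t (delta_mx 0 c : 'M[C]_(1, k))) (A *t (1%:M : 'M[C]_1)).
Proof.
by rewrite /Ad adjmx_tens adjmx1 adjmx_delta !tensmx_mul mul1mx mulmx1 mulmx1 mul_delta_mx.
Qed.

Lemma psd_tens_delta m k (A : 'M[C]_m) (c : 'I_k) :
  is_psd A -> is_psd (A *t (delta_mx c c : 'M[C]_k)).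
Proof. by move=> hA; rewrite tens_deltacc; apply: psd_Ad; apply: psd_tens1. Qed.

Lemma tr_tens m k (A : 'M[C]_m) (B : 'M[C]_k) : \tr (A *t B) = \tr A * \tr B.
Proof.
rewrite /mxtrace sum_pair mulr_suml; apply: eq_bigr => a _.
by rewrite mulr_sumr; apply: eq_bigr => c _; rewrite tensmxE.
Qed.

Lemma psd_diag m (A : 'M[C]_m) (c : 'I_m) : is_psd A -> 0 <= A c c.
Proof. by move=> hA; rewrite -Bdelta; apply: hA. Qed.

Lemma diag_le_tr m (A : 'M[C]_m) (c : 'I_m) : is_psd A -> A c c <= \tr A.
Proof.
move=> hA; rewrite /mxtrace (bigD1 c) //= lerDl.
by apply: sumr_ge0 => i _; apply: psd_diag.
Qed.

Lemma diag2_le_tr m (A : 'M[C]_m) (c d : 'I_m) : c != d -> is_psd A -> A c c + A d d <= \tr A.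
Proof.
move=> ne hA; rewrite /mxtrace (bigD1 c) //= (bigD1 d) /=; last by rewrite eq_sym.
rewrite addrA lerDl.
by apply: sumr_ge0 => i _; apply: psd_diag.
Qed.

Lemma Ad_expand m n (S T : 'M[C]_(m, n)) (u : C) X :
  Ad (S + u *: T) X = Ad S X + u *: (adjmx S *m X *m T) + u^* *: (adjmx T *m X *m S)
                      + (u^* * u) *: Ad T X.
Proof.
rewrite /Ad adjmxD adjmxZ !mulmxDl !mulmxDr -!scalemxAl -!scalemxAr !scalerA.
rewrite -!addrA; congr (_ + _); rewrite addrCA; congr (_ + _).
Qed.

Lemma Ad_e_expand m (X : 'M[C]_m) (a b : 'I_m) (u : C) :
  (Ad ((delta_mx a 0 : 'cV[C]_m) + u *: delta_mx b 0) X) 0 0 =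
  X a a + u * X a b + u^* * X b a + u^* * u * X b b.
Proof.
have eD : forall A B : 'M[C]_1, (A + B) 0 0 = A 0 0 + B 0 0 by move=> A B; rewrite mxE.
have eZ : forall (s : C) (A : 'M[C]_1), (s *: A) 0 0 = s * A 0 0 by move=> s A; rewrite mxE.
by rewrite Ad_expand !eD !eZ /Ad !Bdelta.
Qed.

Lemma conjCi_mul : ('i : C)^* * 'i = 1.
Proof. by rewrite conjCi mulNr -expr2 sqrCi opprK. Qed.

Lemma psd_herm m (X : 'M[C]_m) : is_psd X -> adjmx X = X.
Proof.
move=> hX; apply/matrixP => a b; rewrite mxE.
have hq : forall w : 'cV[C]_m, ((Ad w X) 0 0)^* = (Ad w X) 0 0.
  by move=> w; apply: geC0_conj; apply: hX.
have ha := hq (delta_mx b 0); have hb := hq (delta_mx a 0).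
rewrite /Ad Bdelta in ha; rewrite /Ad Bdelta in hb.
have h1 := hq ((delta_mx b 0 : 'cV[C]_m) + 1 *: delta_mx a 0).
have h2 := hq ((delta_mx b 0 : 'cV[C]_m) + 'i *: delta_mx a 0).
rewrite Ad_e_expand conjC1 mul1r !mulr1 !mul1r in h1.
rewrite Ad_e_expand conjCi_mul mul1r in h2.
rewrite !rmorphD !rmorphM /= ha hb in h1 h2.
have cNi : (- ('i : C))^* = 'i by rewrite -mulN1r rmorphM /= conjCi rmorphN1 mulN1r opprK.
rewrite conjCK conjCi in h2.
set A := X b a in h1 h2 *; set B := X a b in h1 h2 *.
apply/eqP; rewrite -subr_eq0.
have e1 : A^* + B^* - (A + B) = (X b b + A^* + B^* + X a a) - (X b b + A + B + X a a) by ring.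
rewrite h1 subrr in e1.
have e2 : (- 'i * A^* + 'i * B^*) - ('i * A - 'i * B)
   = (X b b + - 'i * A^* + 'i * B^* + X a a) - (X b b + 'i * A + - 'i * B + X a a) by ring.
rewrite h2 subrr in e2.
have key : (A^* + B^* - (A + B)) + 'i * ((- 'i * A^* + 'i * B^*) - ('i * A - 'i * B))
   = 2 * (A^* - B) + ('i ^+ 2 + 1) * (B^* - A^* + B - A) by ring.
rewrite e1 e2 sqrCi addNr mul0r addr0 mulr0 addr0 in key.
have := esym key; move/eqP; rewrite mulf_eq0 pnatr_eq0 /=.
by [].
Qed.


Lemma sum_delta_diag m : \sum_(c < m) (delta_mx c c : 'M[C]_m) = 1%:M.
Proof.
apply/matrixP=> i j; rewrite summxE (bigD1 i) //= big1 => [|c ci].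
  by rewrite !mxE eqxx /= addr0 eq_sym.
by rewrite mxE eq_sym (negbTE ci).
Qed.

Lemma tr_delta m (a b : 'I_m) : \tr (delta_mx a b : 'M[C]_m) = (a == b)%:R.
Proof.
rewrite /mxtrace (bigD1 a) //= big1 => [|c ca]; first by rewrite mxE eqxx addr0 eq_sym.
by rewrite mxE (negbTE ca).
Qed.

Lemma psd_one1 : is_psd (1%:M : 'M[C]_1).
Proof.
move=> v; rewrite quadE !big_ord1 mxE /= mulr1 mulrC; exact: mul_conjC_ge0.
Qed.

Lemma density_delta m (a : 'I_m) : is_density (delta_mx a a : 'M[C]_m).
Proof.
split; last by rewrite tr_delta eqxx.
have -> : (delta_mx a a : 'M[C]_m) = Ad (delta_mx 0 a : 'M[C]_(1, m)) 1%:M.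
  by rewrite /Ad adjmx_delta mulmx1 mul_delta_mx.
by apply: psd_Ad; apply: psd_one1.
Qed.

Definition Dn m (a b : 'I_m) (u : C) : 'M[C]_m :=
  (1 / 2) *: Ad (adjmx (@delta_mx C m 1 a 0 + u *: delta_mx b 0)) 1%:M.

Lemma Dn_expand m (a b : 'I_m) (u : C) : u * u^* = 1 ->
  Dn a b u = (1 / 2) *: (delta_mx a a + u^* *: delta_mx a b + u *: delta_mx b a + delta_mx b b).
Proof.
move=> hu; rewrite /Dn adjmxD adjmxZ !adjmx_delta Ad_expand /Ad !adjmx_delta !mulmx1.
by rewrite !mul_delta_mx conjCK hu scale1r.
Qed.

Lemma density_Dn m (a b : 'I_m) (u : C) : a != b -> u * u^* = 1 -> is_density (Dn a b u).
Proof.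
move=> ab hu; split.
  apply: psd_scale; first by rewrite divr_ge0 ?ler0n.
  by apply: psd_Ad; apply: psd_one1.
rewrite Dn_expand // mxtraceZ !mxtraceD !mxtraceZ !tr_delta !eqxx (negbTE ab) eq_sym (negbTE ab).
by rewrite !mulr0 !addr0 mul1r /= -mulr2n -mulr_natr mul1r mulVf // pnatr_eq0.
Qed.

Definition basD m (a b : 'I_m) (t : 'I_4) : 'M[C]_m :=
  if a == b then delta_mx a a else
  match val t with 0 => Dn a b 1 | 1 => Dn a b 'i | 2 => delta_mx a a | _ => delta_mx b b end.

Definition gam m (a b : 'I_m) (t : 'I_4) : C :=
  if a == b then (if val t == 0%N then 1 else 0) else
  match val t with 0 => 1 | 1 => 'i | _ => - (1 + 'i) / 2 end.

Lemma conjCi_mul' : ('i : C) * 'i^* = 1.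
Proof. by rewrite mulrC conjCi_mul. Qed.

Lemma density_basD m (a b : 'I_m) t : is_density (basD a b t).
Proof.
rewrite /basD; case: eqP => [_|/eqP ab]; first exact: density_delta.
case: t => [[|[|[|t]]] ht] /=.
- by apply: density_Dn; rewrite // conjC1 mulr1.
- by apply: density_Dn; rewrite // conjCi_mul'.
- exact: density_delta.
- exact: density_delta.
Qed.

Lemma bas_sum m (a b : 'I_m) : \sum_(t < 4) gam a b t *: basD a b t = delta_mx a b.
Proof.
rewrite !big_ord_recl big_ord0 /gam /basD /=.
case: eqP => [->|/eqP ab]; first by rewrite scale1r !scale0r !addr0.
rewrite !Dn_expand ?conjC1 ?mulr1 ?conjCi_mul' // conjCi !scale1r.
apply/matrixP => x y; rewrite !mxE.
move: ((x == a) && (y == a))%:R ((x == a) && (y == b))%:R ((x == b) && (y == a))%:R ((x == b) && (y == b))%:R => E1 E2 E3 E4.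
apply/eqP; rewrite -subr_eq0; apply/eqP.
have h : forall z : C, z = ('i ^+ 2 + 1) * ((E3 - E2) / 2) -> z = 0.
  by move=> z ->; rewrite sqrCi addNr mul0r.
by apply: h; field.
Qed.

Definition coJ m (Y : 'M[C]_m) (j : 'I_m * 'I_m * 'I_4) : C :=
  Y j.1.1 j.1.2 * gam j.1.1 j.1.2 j.2.
Definition DJ m (j : 'I_m * 'I_m * 'I_4) : 'M[C]_m := basD j.1.1 j.1.2 j.2.

Lemma coJ_lin m (s : C) (X Y : 'M[C]_m) j : coJ (s *: X + Y) j = s * coJ X j + coJ Y j.
Proof. by rewrite /coJ !mxE mulrDl mulrA. Qed.

Lemma decompJ m (Y : 'M[C]_m) : \sum_j coJ Y j *: DJ j = Y.
Proof.
rewrite -(pair_bigA _ (fun p t => coJ Y (p, t) *: DJ (p, t))) /=.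
rewrite -(pair_bigA _ (fun a b => \sum_t coJ Y ((a, b), t) *: DJ ((a, b), t))) /=.
rewrite [RHS]matrix_sum_delta; apply: eq_bigr => a _; apply: eq_bigr => b _.
rewrite -bas_sum scaler_sumr; apply: eq_bigr => t _.
by rewrite /coJ /DJ /= scalerA.
Qed.

Lemma density_DJ m (j : 'I_m * 'I_m * 'I_4) : is_density (DJ j).
Proof. exact: density_basD. Qed.

Lemma lin_dens_ext m n (f g : 'M[C]_m -> 'M[C]_n) :
  is_linear f -> is_linear g -> (forall rho, is_density rho -> f rho = g rho) ->
  forall X, f X = g X.
Proof.
move=> hf hg h X; rewrite -(decompJ X) !lin_sum //; apply: eq_bigr => j _.
by rewrite !lin_scale // h //; apply: density_DJ.
Qed.

Lemma ptr1_lin m n : is_linear (@ptr1 R m n).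
Proof.
move=> s X Y; apply/matrixP => i j; rewrite !mxE mulr_sumr -big_split /=.
by apply: eq_bigr => a _; rewrite !mxE.
Qed.


Section StarCore.
Variable star : sot_fun R.
Arguments star : clear implicits.
Hypothesis hsot : is_sot star.
Variables (m n : nat) (E : 'M[C]_m -> 'M[C]_n).
Hypothesis hE : is_channel E.
Local Notation SS := (star m n E).
Hypothesis conv2 : forall (r1 r2 : 'M[C]_m) (p q : C), is_density r1 -> is_density r2 ->
  0 <= p -> 0 <= q -> p + q = 1 -> SS (p *: r1 + q *: r2) = p *: SS r1 + q *: SS r2.

Lemma S_scale rho lam : is_density rho -> SS (lam *: rho) = lam *: SS rho.
Proof. by move=> hr; have [_ _ h _] := hsot hE hr; apply: h. Qed.

Definition incone (Z : 'M[C]_m) := exists t rho, [/\ 0 <= t, is_density rho & Z = t *: rho].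

Lemma cone_add Z1 Z2 : incone Z1 -> incone Z2 -> incone (Z1 + Z2) /\ SS (Z1 + Z2) = SS Z1 + SS Z2.
Proof.
move=> [t1 [r1 [h1 d1 ->]]] [t2 [r2 [h2 d2 ->]]].
have [t0|tn0] := boolP (t1 + t2 == 0).
  move: t0; rewrite paddr_eq0 // => /andP[/eqP -> /eqP ->].
  rewrite !scale0r addr0; split; first by exists 0, r1; split; rewrite ?scale0r.
  by rewrite -(scale0r r1) S_scale // !scale0r addr0.
pose T := t1 + t2.
have hT : 0 <= T by rewrite addr_ge0.
pose p := t1 / T; pose q := t2 / T.
have hp : 0 <= p by rewrite divr_ge0.
have hq : 0 <= q by rewrite divr_ge0.
have hpq : p + q = 1 by rewrite /p /q -mulrDl divff.
have ds : is_density (p *: r1 + q *: r2).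
  case: d1 => ps1 tr1; case: d2 => ps2 tr2; split.
    by apply: psd_add; apply: psd_scale.
  by rewrite mxtraceD !mxtraceZ tr1 tr2 !mulr1.
have eZ : t1 *: r1 + t2 *: r2 = T *: (p *: r1 + q *: r2).
  by rewrite scalerDr !scalerA /p /q !(mulrC T) !divfK.
split; first by exists T, (p *: r1 + q *: r2).
by rewrite eZ S_scale // conv2 // scalerDr !scalerA !S_scale // /p /q !(mulrC T) !divfK.
Qed.

Lemma cone_sum (J : finType) (t : J -> C) (D : J -> 'M[C]_m) (rho0 : 'M[C]_m) :
  is_density rho0 -> (forall j, 0 <= t j) -> (forall j, is_density (D j)) ->
  incone (\sum_j t j *: D j) /\ SS (\sum_j t j *: D j) = \sum_j t j *: SS (D j).
Proof.
move=> d0 ht hD.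
apply: (big_ind2 (fun Z W => incone Z /\ SS Z = W)).
- split; first by exists 0, rho0; split; rewrite ?scale0r.
  by rewrite -(scale0r rho0) S_scale // scale0r.
- move=> Z1 W1 Z2 W2 [c1 e1] [c2 e2]; have [c e] := cone_add c1 c2.
  by split => //; rewrite e e1 e2.
- move=> j _; split; first by exists (t j), (D j).
  by rewrite S_scale.
Qed.

Lemma real_core (J : finType) (r : J -> C) (D : J -> 'M[C]_m) rho :
  is_density rho -> (forall j, is_density (D j)) -> (forall j, r j \is Num.real) ->
  rho = \sum_j r j *: D j -> SS rho = \sum_j r j *: SS (D j).
Proof.
move=> dr hD hr e.
pose rp j := if 0 <= r j then r j else 0.
pose rn j := if 0 <= r j then 0 else - r j.
have hrp : forall j, 0 <= rp j by move=> j; rewrite /rp; case: ifP.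
have hrn : forall j, 0 <= rn j.
  move=> j; rewrite /rn; case: ifP => // /negbT h.
  by rewrite oppr_ge0; move: (hr j); rewrite realE (negbTE h).
have hr_ : forall j, r j = rp j - rn j.
  by move=> j; rewrite /rp /rn; case: ifP; rewrite ?subr0 ?sub0r ?opprK.
have [cp ep] := cone_sum dr hrp hD.
have [cn en] := cone_sum dr hrn hD.
have eq1 : rho + \sum_j rn j *: D j = \sum_j rp j *: D j.
  rewrite e -big_split; apply: eq_bigr => j _; rewrite hr_ scalerBl; exact: subrK.
have c0 : incone rho by exists 1, rho; split; rewrite ?scale1r.
have [_ eS] := cone_add c0 cn.
have : SS rho + \sum_j rn j *: SS (D j) = \sum_j rp j *: SS (D j) by rewrite -en -eS eq1 ep.
move/(congr1 (fun z => z - \sum_j rn j *: SS (D j))); rewrite addrK => ->.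
by rewrite -sumrB; apply: eq_bigr => j _; rewrite -scalerBl -hr_.
Qed.

Lemma core (J : finType) (c : J -> C) (D : J -> 'M[C]_m) rho :
  is_density rho -> (forall j, is_density (D j)) ->
  rho = \sum_j c j *: D j -> SS rho = \sum_j c j *: SS (D j).
Proof.
move=> dr hD e.
have hh : forall j, adjmx (D j) = D j by move=> j; apply: psd_herm; case: (hD j).
have hrho : adjmx rho = rho by apply: psd_herm; case: dr.
have ec : rho = \sum_j (c j)^* *: D j.
  by rewrite -{1}hrho e adjmx_sum; apply: eq_bigr => j _; rewrite adjmxZ hh.
have eRe : rho = \sum_j 'Re (c j) *: D j.
  have -> : \sum_j 'Re (c j) *: D j = 2^-1 *: (\sum_j c j *: D j + \sum_j (c j)^* *: D j).
    rewrite -big_split scaler_sumr; apply: eq_bigr => j _ /=.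
    by rewrite ReE -scalerDl scalerA [_ * 2^-1]mulrC.
  rewrite -e -ec.
  have -> : rho + rho = 2 *: rho by rewrite scaler_nat mulr2n.
  by rewrite scalerA mulVf ?scale1r // pnatr_eq0.
have eIm : \sum_j 'Im (c j) *: D j = 0.
  have -> : \sum_j 'Im (c j) *: D j = ('i / 2) *: (\sum_j (c j)^* *: D j - \sum_j c j *: D j).
    rewrite -sumrB scaler_sumr; apply: eq_bigr => j _.
    rewrite ImE -scalerBl scalerA; congr (_ *: _); ring.
  by rewrite -e -ec subrr scaler0.
have h1 := real_core dr hD (fun j => Creal_Re (c j)) eRe.
have eRI : rho = \sum_j ('Re (c j) + 'Im (c j)) *: D j.
  rewrite (eq_bigr (fun j => 'Re (c j) *: D j + 'Im (c j) *: D j)); last by move=> j _; rewrite scalerDl.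
  by rewrite big_split /= eIm addr0.
have h2 := real_core dr hD (fun j => realD (Creal_Re (c j)) (Creal_Im (c j))) eRI.
have h2' : \sum_j ('Re (c j) + 'Im (c j)) *: SS (D j)
    = \sum_j 'Re (c j) *: SS (D j) + \sum_j 'Im (c j) *: SS (D j).
  by rewrite -big_split; apply: eq_bigr => j _ /=; rewrite scalerDl.
have hI : \sum_j 'Im (c j) *: SS (D j) = 0.
  rewrite h1 h2' in h2.
  by apply: (addrI (\sum_j 'Re (c j) *: SS (D j))); rewrite addr0 -h2.
rewrite h1.
have -> : \sum_j c j *: SS (D j) = \sum_j 'Re (c j) *: SS (D j) + 'i *: \sum_j 'Im (c j) *: SS (D j).
  rewrite scaler_sumr -big_split; apply: eq_bigr => j _ /=.
  by rewrite scalerA -scalerDl -Crect.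
by rewrite hI scaler0 addr0.
Qed.

Definition Lext (Y : 'M[C]_m) : 'M[C]_(m * n) := \sum_j coJ Y j *: SS (DJ j).

Lemma Lext_linext : is_linext star E Lext.
Proof.
split.
  move=> s X Y; rewrite /Lext scaler_sumr -big_split; apply: eq_bigr => j _.
  by rewrite coJ_lin scalerDl scalerA.
move=> rho dr; symmetry; apply: core => //; first exact: density_DJ.
by rewrite decompJ.
Qed.

End StarCore.


Lemma lin_sub m n (f : 'M[C]_m -> 'M[C]_n) : is_linear f -> forall x y, f (x - y) = f x - f y.
Proof. by move=> hf x y; rewrite addrC -scaleN1r hf scaleN1r addrC. Qed.

Lemma Jdelta k (c d : 'I_k) :
  Ad (@delta_mx C k 1 c 0) (delta_mx d d) = ((c == d)%:R)%:M.
Proof. by rewrite [LHS]mx11_scalar /Ad Bdelta mxE andbb. Qed.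

Lemma tmap_scaleg m1 n1 m2 n2 (f : 'M[C]_m1 -> 'M[C]_n1) (g : 'M[C]_m2 -> 'M[C]_n2) (s : C) Z :
  tensor_map f (fun X => s *: g X) Z = s *: tensor_map f g Z.
Proof.
rewrite !tmapE -sum4Z; apply: sum4_ext => a b c d.
by rewrite tensmxZr !scalerA mulrC.
Qed.

Lemma tmap_scalef m1 n1 m2 n2 (f : 'M[C]_m1 -> 'M[C]_n1) (g : 'M[C]_m2 -> 'M[C]_n2) (s : C) Z :
  tensor_map (fun X => s *: f X) g Z = s *: tensor_map f g Z.
Proof.
rewrite !tmapE -sum4Z; apply: sum4_ext => a b c d.
by rewrite tensmxZl !scalerA mulrC.
Qed.

Lemma CP_Ad k (w : 'cV[C]_k) : is_CP (Ad w).
Proof.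
split; first exact: lin_Ad.
by move=> k' X hX; rewrite tmap_Ad_l; apply: psd_Ad.
Qed.

Lemma TNI_Ade k (c : 'I_k) : is_TNI (Ad (@delta_mx C k 1 c 0)).
Proof. by move=> X hX; rewrite trace_mx11 /Ad Bdelta; apply: diag_le_tr. Qed.

Lemma CP_halfAd k (w : 'cV[C]_k) : is_CP (fun X => (1/2 : C) *: Ad w X).
Proof.
split; first by apply: lin_scalef; apply: lin_Ad.
move=> k' X hX; rewrite tmap_scalef tmap_Ad_l; apply: psd_scale; last exact: psd_Ad.
by rewrite divr_ge0 ?ler0n.
Qed.

Lemma TNI_halfAd k (c d : 'I_k) (u : C) : c != d -> u^* * u = 1 ->
  is_TNI (fun X => (1/2 : C) *: Ad (@delta_mx C k 1 c 0 + u *: delta_mx d 0) X).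
Proof.
move=> cd hu X hX; rewrite mxtraceZ trace_mx11 Ad_e_expand hu [1 * X d d]mul1r.
have q2 : 0 <= (Ad (@delta_mx C k 1 c 0 + (- u) *: delta_mx d 0) X) 0 0 := hX _.
rewrite Ad_e_expand rmorphN mulrNN hu mul1r /= in q2.
set Q2 := (X c c + - u * X c d + - u^* * X d c + X d d) in q2.
have -> : 1 / 2 * (X c c + u * X c d + u^* * X d c + X d d) = (X c c + X d d) - 1/2 * Q2.
  by rewrite /Q2; field.
apply: le_trans (diag2_le_tr cd hX).
by rewrite lerBlDr lerDl mulr_ge0 // divr_ge0 ?ler0n.
Qed.

Lemma part2 (star : sot_fun R) : is_sot star -> state_linear star ->
  forall L : forall m n : nat, ('M[C]_m -> 'M[C]_n) -> 'M[C]_m -> 'M[C]_(m * n),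
   (forall (m n : nat) (E : 'M[C]_m -> 'M[C]_n), is_channel E -> is_linext star E (L m n E)) ->
   axiomE star (fun m n k E X => tensor_map (L m n E) (fun Y : 'M[C]_k => Y) X).
Proof.
move=> hsot _ L hL; split; [|split; [|split]].
- move=> m n k k' E I rho hE _ hI _; apply: tmap_comp; first exact: (hL m n E hE).1.
  exact: hI.1.
- move=> m n k E rho hE _.
  have hLE := hL m n E hE; have linL := hLE.1; have linE : is_linear E := hE.1.1.
  have hPE : forall X, ptr1 (L m n E X) = E X.
    apply: lin_dens_ext => //; first by apply: lin_comp => //; apply: ptr1_lin.
    move=> r dr; rewrite hLE.2 //; by have [h _ _ _] := hsot m n E hE r dr.
  apply: (tmap_ext (Phi := fun X => tensor_map (@ptr1 R m n) (fun Y : 'M[C]_k => Y)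
                                      (tensor_map (L m n E) (fun Y : 'M[C]_k => Y) X))
                   (Psi := tensor_map E (fun Y : 'M[C]_k => Y))).
  + by apply: lin_comp; apply: tmap_linear.
  + exact: tmap_linear.
  move=> a b c d; rewrite !tmap_tens //; first by rewrite hPE.
  exact: ptr1_lin.
- move=> m n E lam rho hE dr.
  have hLE := hL m n E hE; rewrite tmap_tens //; last exact: hLE.1.
  have [_ _ h _] := hsot m n E hE rho dr.
  by rewrite lin_scale ?hLE.2 ?h //; exact: hLE.1.
- move=> m n E L' hE hL' Y.
  have hLE := hL m n E hE; rewrite tmap_tens //; last exact: hLE.1.
  congr (_ *t _); apply: lin_dens_ext; [exact: hLE.1 | exact: hL'.1 |].
  by move=> r dr; rewrite hLE.2 // hL'.2.
Qed.


Lemma conv2_of_axiomE (star : sot_fun R) (ext : ext_fun R) : is_sot star -> axiomE star ext ->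
  forall (m n : nat) (E : 'M[C]_m -> 'M[C]_n), is_channel E ->
  forall (r1 r2 : 'M[C]_m) (p q : C), is_density r1 -> is_density r2 ->
  0 <= p -> 0 <= q -> p + q = 1 ->
  star m n E (p *: r1 + q *: r2) = p *: star m n E r1 + q *: star m n E r2.
Proof.
move=> hsot [ax1 [_ [ax3 _]]] m n E hE r1 r2 p q d1 d2 hp hq hpq.
pose e0 : 'cV[C]_2 := delta_mx 0 0; pose e1 : 'cV[C]_2 := delta_mx 1 0.
pose Z : 'M[C]_(m * 2) := (p *: r1) *t (delta_mx 0 0 : 'M[C]_2) + (q *: r2) *t (delta_mx 1 1 : 'M[C]_2).
have dZ : is_density Z.
  case: d1 => ps1 tr1; case: d2 => ps2 tr2; split.
    by apply: psd_add; apply: psd_tens_delta; apply: psd_scale.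
  by rewrite mxtraceD !tr_tens !tr_delta !mxtraceZ tr1 tr2 !eqxx !mulr1.
have QZ : is_QSS star Z by left.
have la0 := lin_Ad e0; have la1 := lin_Ad e1.
have z0 : (0%:R%:M : 'M[C]_1) = 0 by apply/matrixP => i j; rewrite !mxE mul0rn.
have eJ0 : tensor_map (fun Y : 'M[C]_m => Y) (Ad e0) Z = (p *: r1) *t (1%:M : 'M[C]_1).
  rewrite (lin_add (tmap_linear _ _)) !tmap_tens //.
  by rewrite /e0 !Jdelta eqxx /= z0 tensmx0 addr0.
have eJ1 : tensor_map (fun Y : 'M[C]_m => Y) (Ad e1) Z = (q *: r2) *t (1%:M : 'M[C]_1).
  rewrite (lin_add (tmap_linear _ _)) !tmap_tens //.
  by rewrite /e1 !Jdelta eqxx /= z0 tensmx0 add0r.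
have CPtr : is_CP (fun X => Ad e0 X + Ad e1 X).
  split; first by apply: lin_addf; apply: lin_Ad.
  move=> k' X hX; rewrite tmap_addf //.
  by apply: psd_add; rewrite tmap_Ad_l; apply: psd_Ad.
have TNItr : is_TNI (fun X => Ad e0 X + Ad e1 X).
  move=> X hX; rewrite mxtraceD !trace_mx11 /Ad /e0 /e1 !Bdelta.
  by apply: diag2_le_tr.
have h0 := ax1 m n 2 1 E (Ad e0) Z hE QZ (CP_Ad _) (TNI_Ade _).
have h1 := ax1 m n 2 1 E (Ad e1) Z hE QZ (CP_Ad _) (TNI_Ade _).
have ht := ax1 m n 2 1 E _ Z hE QZ CPtr TNItr.
rewrite eJ0 (ax3 _ _ _ _ _ hE d1) in h0.
rewrite eJ1 (ax3 _ _ _ _ _ hE d2) in h1.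
rewrite [tensor_map _ _ Z]tmap_addg // eJ0 eJ1 in ht.
rewrite -tensmxDl -[p *: r1 + q *: r2]scale1r (ax3 _ _ _ _ _ hE) in ht; last first.
  case: d1 => ps1 tr1; case: d2 => ps2 tr2; split.
    by apply: psd_add; apply: psd_scale.
  by rewrite mxtraceD !mxtraceZ tr1 tr2 !mulr1.
rewrite tmap_addg // h0 h1 in ht.
have [_ _ s1 _] := hsot m n E hE r1 d1.
have [_ _ s2 _] := hsot m n E hE r2 d2.
rewrite scale1r -tensmxDl s1 s2 in ht.
by apply: tens1_inj; rewrite -ht.
Qed.


Lemma part1 (star : sot_fun R) (ext : ext_fun R) : is_sot star -> axiomE star ext ->
  forall (m n k : nat) (E : 'M[C]_m -> 'M[C]_n) (rho : 'M[C]_(m * k)),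
    is_channel E -> is_QSS star rho ->
    exists L : 'M[C]_m -> 'M[C]_(m * n),
      is_linext star E L /\ ext m n k E rho = tensor_map L (fun Y : 'M[C]_k => Y) rho.
Proof.
move=> hsot hax m n k E rho hE hQ.
have conv2 := conv2_of_axiomE hsot hax hE.
have hL := Lext_linext hsot hE conv2.
set L := @Lext star m n E in hL *.
exists L; split => //.
case: hax => [ax1 [_ [_ ax4]]].
have linL := hL.1.
set W := ext m n k E rho; set V := tensor_map L (fun Y : 'M[C]_k => Y) rho.
have key : forall I : 'M[C]_k -> 'M[C]_1, is_CP I -> is_TNI I ->
    tensor_map (fun Y : 'M[C]_(m * n) => Y) I W = tensor_map (fun Y : 'M[C]_(m * n) => Y) I V.
  move=> I hCP hTNI; have linI := hCP.1.
  rewrite /W ax1 // /V tmap_comp //.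
  by rewrite [tensor_map _ I rho]shrinkK (ax4 _ _ _ L) // tmap_tens.
pose D := W - V.
have keyD : forall I : 'M[C]_k -> 'M[C]_1, is_CP I -> is_TNI I ->
    tensor_map (fun Y : 'M[C]_(m * n) => Y) I D = 0.
  by move=> I hCP hTNI; rewrite /D lin_sub ?key ?subrr //; apply: tmap_linear.
pose Sc (c : 'I_k) := (1%:M : 'M[C]_(m * n)) *t (@delta_mx C k 1 c 0).
have f1 : forall c, Ad (Sc c) D = 0.
  by move=> c; rewrite -tmap_Ad_r keyD //; [apply: CP_Ad | apply: TNI_Ade].
have f2 : forall c d (u : C), c != d -> u^* * u = 1 ->
    u *: (adjmx (Sc c) *m D *m Sc d) + u^* *: (adjmx (Sc d) *m D *m Sc c) = 0.
  move=> c d u cd hu.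
  have := keyD _ (CP_halfAd (@delta_mx C k 1 c 0 + u *: delta_mx d 0)) (TNI_halfAd cd hu).
  rewrite tmap_scaleg tmap_Ad_r tensmxDr tensmxZr Ad_expand !f1 hu scale1r add0r addr0.
  move/eqP; rewrite scalemx_eq0 mulf_eq0 oner_eq0 invr_eq0 pnatr_eq0 /= => /eqP.
  exact.
have hB : forall c d, adjmx (Sc c) *m D *m Sc d = 0.
  move=> c d; have [<-|cd] := eqVneq c d; first exact: f1.
  have g1 := f2 c d 1 cd; rewrite conjC1 mulr1 !scale1r in g1.
  have g2 := f2 c d 'i cd conjCi_mul; rewrite conjCi in g2.
  have ey : adjmx (Sc d) *m D *m Sc c = - (adjmx (Sc c) *m D *m Sc d).
    by apply/eqP; rewrite -addr_eq0 addrC g1.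
  rewrite ey scaleNr scalerN opprK -scalerDl in g2.
  move/eqP: g2; rewrite scalemx_eq0 => /orP[|/eqP //].
  by rewrite -mulr2n mulrn_eq0 /= (negbTE (neq0Ci _)).
have hI : (1%:M : 'M[C]_(m * n * k)) = \sum_c Sc c *m adjmx (Sc c).
  rewrite -(tens11 (m * n) k) -(sum_delta_diag k) tensmx_sumr; apply: eq_bigr => c _.
  by rewrite /Sc adjmx_tens adjmx1 adjmx_delta tensmx_mul mulmx1 mul_delta_mx.
have D0 : D = 0.
  rewrite -[D]mul1mx -[D in LHS]mulmx1 hI mulmxA !mulmx_suml big1 // => c _.
  rewrite mulmx_sumr big1 // => d _.
  by rewrite -!mulmxA [adjmx (Sc c) *m _]mulmxA [adjmx (Sc c) *m _ *m _]mulmxA hB mul0mx mulmx0.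
by apply/eqP; rewrite -subr_eq0; apply/eqP.
Qed.

End Aux.

Unset Implicit Arguments.

Theorem corollary1 (R : realType) :
  (* (E) implies the formula E * rho_AE = ((E * .) (x) id_E)(rho_AE) *)
  (forall (star : sot_fun R) (ext : ext_fun R),
     is_sot star -> axiomE star ext ->
     forall (m n k : nat) (E : 'M[R[i]]_m -> 'M[R[i]]_n) (rho : 'M[R[i]]_(m * k)),
       is_channel E -> is_QSS star rho ->
       exists L : 'M[R[i]]_m -> 'M[R[i]]_(m * n),
         is_linext star E L /\
         ext m n k E rho = tensor_map L (fun Y : 'M[R[i]]_k => Y) rho) /\
  (* conversely, state-linear functions satisfy (E) with this formula *)
  (forall star : sot_fun R,
     is_sot star -> state_linear star ->
     forall L : forall m n : nat, ('M[R[i]]_m -> 'M[R[i]]_n) -> 'M[R[i]]_m -> 'M[R[i]]_(m * n),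
       (forall (m n : nat) (E : 'M[R[i]]_m -> 'M[R[i]]_n),
          is_channel E -> is_linext star E (L m n E)) ->
       axiomE star (fun m n k E X => tensor_map (L m n E) (fun Y : 'M[R[i]]_k => Y) X)).
Proof.
split.
- move=> star ext hs ha m n k E rho hE hQ; exact: (part1 hs ha hE hQ).
- move=> star hs hsl L hL; exact: (part2 hs hsl hL).
Qed.
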